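(* Let $G$ be a finite group. The monoid $(\mathsf{Sym}_{G,0}/\sim)$ of stable equivalence classes of $0$-dimensional locality preserving symmetries is a group, and there is a group isomorphism $\Omega:(\mathsf{Sym}_{G,0}/\sim)\to H^2(G,U(1))$.
   Context: A $0$-dimensional spin system is a single site: $\mathcal A=\mathcal B(\mathcal H)$ for a finite-dimensional Hilbert space $\mathcal H$. A $0$-dimensional locality preserving symmetry (LPS) $(\beta,\mathcal A)$ is a group homomorphism $\beta:G\to\mathrm{Aut}(\mathcal A)$ (equivalently $\beta_g=\mathrm{Ad}(U(g))$ for a projective unitary representation $U$). An on-site symmetry is one with $\beta_g=\mathrm{Ad}(U(g))$ for a linear unitary representation $U$. Two LPSs $(\beta,\mathcal A),(\beta',\mathcal A)$ are equivalent if $\beta'_g=\gamma^{-1}\circ\beta_g\circ\gamma$ for all $g$ for some FDQC $\gamma$ (in $0$ dimensions: an inner automorphism $\mathrm{Ad}(V)$). $(\beta,\mathcal A)$ and $(\beta',\mathcal A')$ are stably equivalent ($\sim$) if there exist on-site symmetries $(\delta,\tilde{\mathcal A}),(\delta',\tilde{\mathcal A}')$ such that $(\beta\otimes\delta,\mathcal A\otimes\tilde{\mathcal A})$ and $(\beta'\otimes\delta',\mathcal A'\otimes\tilde{\mathcal A}')$ are equivalent (in particular $\mathcal A\otimes\tilde{\mathcal A}\cong\mathcal A'\otimes\tilde{\mathcal A}'$). $\mathsf{Sym}_{G,0}$ is the set of $0$-dimensional LPSs, a monoid under stacking $(\beta\otimes\beta',\mathcal A\otimes\mathcal A')$. $H^2(G,U(1))$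 is group cohomology with trivial action. *)

(* Defs.v *)
From HB Require Import structures.
From mathcomp Require Import all_boot all_order all_algebra all_fingroup.
From mathcomp Require Import reals.
From mathcomp Require Import complex mxtens.

Set Implicit Arguments.
Unset Strict Implicit.
Unset Printing Implicit Defensive.

Import GRing.Theory Num.Theory.
Local Open Scope ring_scope.

Section ZeroDimLPS.

Variable R : realType.
Local Notation C := (R[i]).

Definition adjmx {m n} (A : 'M[C]_(m, n)) : 'M[C]_(n, m) := (map_mx Num.conj A)^T.

Definition unitarymx {n} (U : 'M[C]_n) : Prop :=
  U *m adjmx U = 1%:M /\ adjmx U *m U = 1%:M.

Definition Ad {n} (U : 'M[C]_n) (A : 'M[C]_n) : 'M[C]_n := U *m A *m adjmx U.

Definition star_iso {n m} (f : 'M[C]_n -> 'M[C]_m) : Prop :=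
  [/\ (forall (a : C) (A B : 'M[C]_n), f (a *: A + B) = a *: f A + f B),
      (forall A B : 'M[C]_n, f (A *m B) = f A *m f B),
      f 1%:M = 1%:M,
      (forall A : 'M[C]_n, f (adjmx A) = adjmx (f A))
    & bijective f].

Variable gT : finGroupType.

(* A 0-dimensional LPS on A = B(H), H = C^n, n > 0: a group homomorphism
   beta : G -> Aut(A). *)
Definition is_LPS {n} (beta : gT -> 'M[C]_n -> 'M[C]_n) : Prop :=
  [/\ (0 < n)%N,
      (forall g, star_iso (beta g)),
      (forall A, beta 1%g A = A)
    & (forall g h A, beta (g * h)%g A = beta g (beta h A))].

Definition is_onsite {n} (beta : gT -> 'M[C]_n -> 'M[C]_n) : Prop :=
  is_LPS beta /\
  exists U : gT -> 'M[C]_n,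
    [/\ (forall g, unitarymx (U g)),
        U 1%g = 1%:M,
        (forall g h, U (g * h)%g = U g *m U h)
      & (forall g A, beta g A = Ad (U g) A)].

(* the tensor product f (x) f' of linear maps on B(C^n) and B(C^m), acting on
   B(C^n (x) C^m) = 'M_(n * m) (Kronecker product [tensmx]):
   (f (x) f') (A *t B) = f A *t f' B, extended linearly *)
Definition tens_map {n m} (f : 'M[C]_n -> 'M[C]_n) (f' : 'M[C]_m -> 'M[C]_m)
  (X : 'M[C]_(n * m)) : 'M[C]_(n * m) :=
  \sum_(i < n) \sum_(k < n) \sum_(j < m) \sum_(l < m)
     X (mxtens_index (i, j)) (mxtens_index (k, l)) *:
       tensmx (f (delta_mx i k)) (f' (delta_mx j l)).

Definition stack {n m} (beta : gT -> 'M[C]_n -> 'M[C]_n)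
  (beta' : gT -> 'M[C]_m -> 'M[C]_m) : gT -> 'M[C]_(n * m) -> 'M[C]_(n * m) :=
  fun g => tens_map (beta g) (beta' g).

(* equivalence of LPSs on (identified) algebras: beta' = gamma^-1 o beta o gamma
   with gamma = Ad(V) an inner automorphism (V unitary), where the algebras
   B(C^n) and B(C^n') are identified through a *-isomorphism iota *)
Definition LPS_equiv {n n'} (beta : gT -> 'M[C]_n -> 'M[C]_n)
  (beta' : gT -> 'M[C]_n' -> 'M[C]_n') : Prop :=
  exists (iota : 'M[C]_n -> 'M[C]_n') (V : 'M[C]_n'),
    [/\ star_iso iota, unitarymx V &
        forall g (A : 'M[C]_n),
          beta' g (Ad (adjmx V) (iota A)) = Ad (adjmx V) (iota (beta g A))].

Definition stably_equiv {n n'} (beta : gT -> 'M[C]_n -> 'M[C]_n)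
  (beta' : gT -> 'M[C]_n' -> 'M[C]_n') : Prop :=
  exists (m m' : nat) (delta : gT -> 'M[C]_m -> 'M[C]_m)
         (delta' : gT -> 'M[C]_m' -> 'M[C]_m'),
    [/\ is_onsite delta, is_onsite delta' &
        LPS_equiv (stack beta delta) (stack beta' delta')].

Definition trivial_LPS : gT -> 'M[C]_1 -> 'M[C]_1 := fun _ A => A.

(* group cohomology H^2(G, U(1)) with trivial action: U(1)-valued 2-cocycles
   modulo coboundaries, group law = pointwise product *)
Definition U1_2cocycle (w : gT -> gT -> C) : Prop :=
  (forall g h, `|w g h| = 1) /\
  (forall g h k, w h k * w g (h * k)%g = w (g * h)%g k * w g h).

Definition cohomologous (w w' : gT -> gT -> C) : Prop :=
  exists mu : gT -> C, (forall g, `|mu g| = 1) /\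
    forall g h, w' g h = w g h * (mu g * mu h / mu (g * h)%g).

Definition cocycle_mul (w w' : gT -> gT -> C) : gT -> gT -> C :=
  fun g h => w g h * w' g h.

End ZeroDimLPS.

(* Main.v *)
Require Import Defs.
From HB Require Import structures.
From mathcomp Require Import all_boot all_order all_algebra all_fingroup.
From mathcomp Require Import reals.
From mathcomp Require Import complex mxtens.
From mathcomp Require Import boolp.
From mathcomp Require Import ring.
Import GRing.Theory Num.Theory.
Local Open Scope ring_scope.
Set Implicit Arguments.
Unset Strict Implicit.
Section Adj.
Variable R : realType.
Local Notation C := (R[i]).

Lemma adjmxE m n (A : 'M[C]_(m,n)) i j : adjmx A i j = (A j i)^*.
Proof. by rewrite /adjmx !mxE. Qed.

Lemma adjmxK m n (A : 'M[C]_(m,n)) : adjmx (adjmx A) = A.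
Proof. by apply/matrixP=> i j; rewrite !adjmxE conjCK. Qed.

Lemma adjmxM m n p (A : 'M[C]_(m,n)) (B : 'M[C]_(n,p)) :
  adjmx (A *m B) = adjmx B *m adjmx A.
Proof. by rewrite /adjmx map_mxM trmx_mul. Qed.

Lemma adjmxD m n (A B : 'M[C]_(m,n)) : adjmx (A + B) = adjmx A + adjmx B.
Proof. by apply/matrixP=> i j; rewrite !(adjmxE, mxE) rmorphD. Qed.

Lemma adjmxZ m n a (A : 'M[C]_(m,n)) : adjmx (a *: A) = a^* *: adjmx A.
Proof. by apply/matrixP=> i j; rewrite !(adjmxE, mxE) rmorphM. Qed.

Lemma adjmx_scalar n (a : C) : adjmx (a%:M : 'M_n) = a^*%:M.
Proof. by apply/matrixP=> i j; rewrite !(adjmxE, mxE) eq_sym rmorphMn. Qed.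

Lemma adjmx1 n : adjmx (1%:M : 'M[C]_n) = 1%:M.
Proof. by rewrite adjmx_scalar conjC1. Qed.

Lemma adjmx_delta m n i j : adjmx (delta_mx i j : 'M[C]_(m,n)) = delta_mx j i.
Proof. by apply/matrixP=> a b; rewrite !(adjmxE, mxE) rmorph_nat andbC (eq_sym a) (eq_sym b). Qed.

Lemma adjmx_tens m n p q (A : 'M[C]_(m,n)) (B : 'M[C]_(p,q)) :
  adjmx (A *t B) = adjmx A *t adjmx B.
Proof. by rewrite /adjmx map_mxT trmx_tens. Qed.

Lemma adjmx_sum m n I (r : seq I) (P : pred I) (F : I -> 'M[C]_(m,n)) :
  adjmx (\sum_(i <- r | P i) F i) = \sum_(i <- r | P i) adjmx (F i).
Proof. by apply: (big_morph _ (@adjmxD m n)); apply/matrixP=> i j; rewrite !(adjmxE, mxE) conjC0. Qed.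
End Adj.

Section Mx.
Variable R : realType.
Local Notation C := (R[i]).

Lemma mul_deltaE_l m n p (i : 'I_m) (j : 'I_n) (M : 'M[C]_(n,p)) r c :
  (delta_mx i j *m M) r c = (r == i)%:R * M j c.
Proof.
rewrite mxE (bigD1 j) //= big1 ?addr0; first by rewrite mxE eqxx andbT.
by move=> k /negbTE nk; rewrite mxE nk andbF mul0r.
Qed.

Lemma mul_deltaE_r m n p (i : 'I_n) (j : 'I_p) (M : 'M[C]_(m,n)) r c :
  (M *m delta_mx i j) r c = M r i * (j == c)%:R.
Proof.
rewrite mxE (bigD1 i) //= big1 ?addr0; first by rewrite mxE eqxx eq_sym.
by move=> k /negbTE nk; rewrite mxE nk mulr0.
Qed.

Lemma central_scalar n (M : 'M[C]_n.+1) :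
  (forall A, A *m M = M *m A) -> M = (M ord0 ord0)%:M.
Proof.
move=> H; apply/matrixP=> a b.
have /matrixP/(_ ord0 b) := H (delta_mx ord0 a).
rewrite mul_deltaE_l mul_deltaE_r eqxx mul1r => ->.
by rewrite !mxE eq_sym mulr_natr.
Qed.

Lemma scal_inj n (X : 'M[C]_n.+1) a b :
  adjmx X *m X = 1%:M -> a *: X = b *: X -> a = b.
Proof.
move=> HX E.
have /matrixP/(_ ord0 ord0) := congr1 (mulmx (adjmx X)) E.
by rewrite -!scalemxAr HX !mxE eqxx !mulr1.
Qed.

Definition isounit {N' N} (Y : 'M[C]_(N',N)) :=
  adjmx Y *m Y = 1%:M /\ Y *m adjmx Y = 1%:M.

Definition AdR {N' N} (Y : 'M[C]_(N',N)) (A : 'M[C]_N) : 'M[C]_N' :=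
  Y *m A *m adjmx Y.

Lemma isounit_adj N' N (Y : 'M[C]_(N',N)) : isounit Y -> isounit (adjmx Y).
Proof. by case=> h1 h2; split; rewrite adjmxK. Qed.

Lemma isounit_mul N'' N' N (Y : 'M[C]_(N'',N')) (Z : 'M[C]_(N',N)) :
  isounit Y -> isounit Z -> isounit (Y *m Z).
Proof.
case=> y1 y2 [z1 z2]; split; rewrite adjmxM.
  by rewrite mulmxA -(mulmxA (adjmx Z)) y1 mulmx1 z1.
by rewrite mulmxA -(mulmxA Y) z2 mulmx1 y2.
Qed.

Lemma star_iso_AdR N' N (Y : 'M[C]_(N',N)) : isounit Y -> star_iso (AdR Y).
Proof.
case=> h1 h2; split.
- by move=> a A B; rewrite /AdR mulmxDr mulmxDl -scalemxAr -scalemxAl.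
- by move=> A B; rewrite /AdR !mulmxA -(mulmxA _ (adjmx Y)) h1 mulmx1.
- by rewrite /AdR mulmx1 h2.
- by move=> A; rewrite /AdR !adjmxM adjmxK mulmxA.
exists (AdR (adjmx Y)) => A; rewrite /AdR adjmxK !mulmxA.
  by rewrite h1 mul1mx -mulmxA h1 mulmx1.
by rewrite h2 mul1mx -mulmxA h2 mulmx1.
Qed.

Section SIso.
Variables (N N' : nat) (f : 'M[C]_N -> 'M[C]_N').
Hypothesis fl : forall (a : C) (A B : 'M[C]_N), f (a *: A + B) = a *: f A + f B.

Lemma siso0 : f 0 = 0.
Proof. have := fl 1 0 0; rewrite !scale1r addr0 => h. by apply: (addrI (f 0)); rewrite -h addr0. Qed.

Lemma sisoD A B : f (A + B) = f A + f B.
Proof. by have := fl 1 A B; rewrite !scale1r. Qed.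

Lemma sisoZ a A : f (a *: A) = a *: f A.
Proof. by rewrite -(addr0 (a *: A)) fl siso0 addr0. Qed.

Lemma siso_sum I (r : seq I) (P : pred I) (F : I -> 'M[C]_N) :
  f (\sum_(i <- r | P i) F i) = \sum_(i <- r | P i) f (F i).
Proof. exact: (big_morph _ sisoD siso0). Qed.

Lemma siso_expand A :
  f A = \sum_i \sum_j A i j *: f (delta_mx i j).
Proof.
rewrite {1}(matrix_sum_delta A) siso_sum; apply: eq_bigr => i _.
by rewrite siso_sum; apply: eq_bigr => j _; rewrite sisoZ.
Qed.
End SIso.
End Mx.

Section SN.
Variable R : realType.
Local Notation C := (R[i]).

Lemma SN n N' (f : 'M[C]_n.+1 -> 'M[C]_N') :
  star_iso f -> exists Y : 'M[C]_(N', n.+1), isounit Y /\ forall A, f A = AdR Y A.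
Proof.
case: N' f => [|n'] f [fl fM f1 fadj fbij].
  exfalso.
  have : delta_mx ord0 ord0 = 0 :> 'M[C]_n.+1.
    by apply: (bij_inj fbij); apply/matrixP => [[]].
  by move/matrixP/(_ ord0 ord0); rewrite !mxE eqxx /= => /eqP; rewrite oner_eq0.
pose e : 'M[C]_n.+1 := delta_mx ord0 ord0.
pose P := f e.
have PP : P *m P = P by rewrite /P -fM mul_delta_mx.
have P0 : P != 0.
  apply/negP => /eqP P0.
  have : e = 0 by apply: (bij_inj fbij); rewrite -/P P0 (siso0 fl).
  move/matrixP/(_ ord0 ord0); rewrite !mxE !eqxx /= => /eqP.
  by rewrite oner_eq0.
have [r [k Prk]] : exists r k, P r k != 0.
  case: (pselect (exists r k, P r k != 0)) => // h; exfalso.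
  move/negP: P0; apply; apply/eqP/matrixP => r k; rewrite mxE.
  by apply/eqP/negPn/negP => hk; apply: h; exists r, k.
pose x : 'M[C]_(n'.+1,1) := P *m delta_mx k ord0.
have Px : P *m x = x by rewrite /x mulmxA PP.
have xE a : x a ord0 = P a k by rewrite /x mul_deltaE_r eqxx mulr1.
pose s := (adjmx x *m x) ord0 ord0.
have sE : s = \sum_a `|x a ord0| ^+ 2.
  by rewrite /s mxE; apply: eq_bigr => a _; rewrite adjmxE normCKC.
have s_gt0 : 0 < s.
  rewrite sE (bigD1 r) //=; apply: ltr_wpDr.
    by apply: sumr_ge0 => a _; rewrite exprn_ge0.
  by rewrite exprn_gt0 // normr_gt0 xE.
pose t := sqrtC s.
have t0 : t != 0 by rewrite sqrtC_eq0 lt0r_neq0.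
have tc : t^* = t by rewrite geC0_conj // sqrtC_ge0 le0r s_gt0 orbT.
have tt : t * t = s by rewrite -expr2 sqrtCK.
pose v := t^-1 *: x.
have vv : adjmx v *m v = 1%:M.
  have tic : (t^-1)^* = t^-1 by rewrite geC0_conj // invr_ge0 sqrtC_ge0 le0r s_gt0 orbT.
  rewrite /v adjmxZ tic -scalemxAl -scalemxAr scalerA.
  rewrite [adjmx x *m x]mx11_scalar -/s scale_scalar_mx -tt -invfM mulVf //.
  by rewrite mulf_neq0.
have Pv : P *m v = v by rewrite /v -scalemxAr Px.
pose Y := \sum_(i < n.+1) f (delta_mx i ord0) *m v *m delta_mx (ord0 : 'I_1) i.
have fe i j : f (delta_mx ord0 i) *m f (delta_mx j ord0) = (i == j)%:R *: P.
  rewrite -fM; case: (i =P j) => [->|ne]; first by rewrite mul_delta_mx scale1r.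
  by rewrite mul_delta_mx_0 ?(siso0 fl) ?scale0r //; apply/eqP.
have YY : adjmx Y *m Y = 1%:M.
  rewrite /Y adjmx_sum mulmx_suml mx1_sum_delta; apply: eq_bigr => i _.
  rewrite mulmx_sumr (bigD1 i) //= big1 ?addr0.
    have -> : adjmx (f (delta_mx i ord0) *m v *m delta_mx ord0 i) *m
      (f (delta_mx i ord0) *m v *m delta_mx ord0 i) =
      delta_mx i ord0 *m (adjmx v *m (f (delta_mx ord0 i) *m f (delta_mx i ord0)) *m v)
        *m delta_mx ord0 i.
      by rewrite !adjmxM -fadj !adjmx_delta !mulmxA.
    by rewrite fe eqxx scale1r -(mulmxA _ P) Pv vv mulmx1 mul_delta_mx.
  move=> j ij.
  have -> : adjmx (f (delta_mx i ord0) *m v *m delta_mx ord0 i) *m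
      (f (delta_mx j ord0) *m v *m delta_mx ord0 j) =
      delta_mx i ord0 *m (adjmx v *m (f (delta_mx ord0 i) *m f (delta_mx j ord0)) *m v)
        *m delta_mx ord0 j.
    by rewrite !adjmxM -fadj !adjmx_delta !mulmxA.
  by rewrite fe eq_sym (negbTE ij) scale0r !(mulmx0, mul0mx).
have fY A : f A *m Y = Y *m A.
  rewrite (siso_expand fl A) {2}(matrix_sum_delta A) mulmx_suml mulmx_sumr.
  apply: eq_bigr => a _; rewrite mulmx_suml mulmx_sumr; apply: eq_bigr => b _.
  rewrite -scalemxAl -scalemxAr; congr (_ *: _).
  rewrite /Y mulmx_sumr mulmx_suml (bigD1 b) //= big1 ?addr0; last first.
    move=> i bi; rewrite !mulmxA -fM mul_delta_mx_0 ?(siso0 fl) ?mul0mx //.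
    by rewrite eq_sym.
  rewrite (bigD1 a) //= big1 ?addr0; last first.
    by move=> i ai; rewrite -(mulmxA _ (delta_mx ord0 i)) mul_delta_mx_0 ?mulmx0.
  by rewrite !mulmxA -fM !mul_delta_mx -!mulmxA mul_delta_mx.
have Yf A : adjmx Y *m f A = A *m adjmx Y.
  have := congr1 (@adjmx R _ _) (fY (adjmx A)).
  by rewrite !adjmxM fadj !adjmxK.
have YYs : Y *m adjmx Y = 1%:M.
  pose Q := Y *m adjmx Y.
  have Qc : Q = (Q ord0 ord0)%:M.
    apply: central_scalar => B.
    case: fbij => g gK Kg.
    by rewrite -(Kg B) /Q mulmxA fY -mulmxA -Yf mulmxA.
  have QQ : Q *m Q = Q by rewrite /Q mulmxA -(mulmxA Y) YY mulmx1.
  set c := Q ord0 ord0 in Qc.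
  have cc : c * c = c.
    by move: QQ; rewrite Qc -scalar_mxM => /matrixP/(_ ord0 ord0); rewrite !mxE eqxx !mulr1n.
  have c0 : c != 0.
    apply/eqP => c0; move: Qc; rewrite c0 => Q0.
    have := congr1 (fun M => adjmx Y *m M *m Y) Q0; rewrite /= /Q.
    rewrite mulmxA YY mul1mx YY mul_mx_scalar scale0r mul0mx => /matrixP/(_ ord0 ord0).
    by rewrite !mxE eqxx /= => /eqP; rewrite oner_eq0.
  have c1 : c = 1 by apply: (mulfI c0); rewrite cc mulr1.
  by rewrite -/Q Qc c1.
exists Y; split => // A.
by rewrite /AdR -fY -mulmxA YYs mulmx1.
Qed.
End SN.

Section Grp.
Variable R : realType.
Local Notation C := (R[i]).
Variable gT : finGroupType.

Definition projrep {N} (U : gT -> 'M[C]_N) (w : gT -> gT -> C) :=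
  forall g h, U g *m U h = w g h *: U (g * h)%g.

Lemma unitary_isounit N (U : 'M[C]_N) : @Defs.unitarymx R N U <-> isounit U.
Proof. by split; case. Qed.

Lemma norm1_cc (c : C) : `|c| = 1 -> c^* * c = 1.
Proof. by move=> h; rewrite -normCKC h expr1n. Qed.

Lemma norm1_cc' (c : C) : `|c| = 1 -> c * c^* = 1.
Proof. by move=> h; rewrite -normCK h expr1n. Qed.

Lemma norm1_neq0 (c : C) : `|c| = 1 -> c != 0.
Proof. by move=> h; apply/eqP => c0; move: h; rewrite c0 normr0 => /eqP; rewrite eq_sym oner_eq0. Qed.

Lemma cc_norm1 (c : C) : c^* * c = 1 -> `|c| = 1.
Proof. by move=> h; apply/eqP; rewrite -sqrp_eq1 ?normr_ge0 // normCKC h. Qed.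

Lemma adj_eq_scal n (X V : 'M[C]_n.+1) : isounit X -> isounit V ->
  (forall A, AdR X A = AdR V A) -> exists c, `|c| = 1 /\ V = c *: X.
Proof.
move=> [x1 x2] [v1 v2] H.
pose M := adjmx X *m V.
have Mc : M = (M ord0 ord0)%:M.
  apply: central_scalar => A.
  have := congr1 (fun B => adjmx X *m B *m V) (H A); rewrite /AdR /=.
  rewrite !mulmxA x1 mul1mx -!mulmxA v1 mulmx1 => ->.
  by rewrite /M !mulmxA.
set c := M ord0 ord0 in Mc.
have VE : V = c *: X by rewrite -mul_mx_scalar -Mc /M mulmxA x2 mul1mx.
exists c; split => //.
apply: cc_norm1; move: v1; rewrite VE adjmxZ -scalemxAl -scalemxAr scalerA x1.
by move/matrixP/(_ ord0 ord0); rewrite !mxE eqxx !mulr1n mulr1.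
Qed.

Lemma cocycle_of n (U : gT -> 'M[C]_n.+1) :
  (forall g, isounit (U g)) ->
  (forall g h A, AdR (U (g * h)%g) A = AdR (U g) (AdR (U h) A)) ->
  exists w, projrep U w /\ U1_2cocycle w.
Proof.
move=> Uu H.
have H2 : forall p : gT * gT, exists c : C,
    `|c| = 1 /\ U p.1 *m U p.2 = c *: U (p.1 * p.2)%g.
  move=> [g h]; apply: adj_eq_scal => //=; first exact: isounit_mul.
  by move=> A; rewrite H /AdR adjmxM !mulmxA.
have [f hf] := choice H2.
exists (fun g h => f (g, h)).
have pr : forall g h, U g *m U h = f (g, h) *: U (g * h)%g.
  by move=> g h; case: (hf (g, h)).
split => //; split; first by move=> g h; case: (hf (g, h)).
move=> g h k.
have [u1 _] := Uu (g * h * k)%g.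
apply: (scal_inj u1).
rewrite -!scalerA -{1}(mulgA g h k) -(pr g (h * k)%g) scalemxAr -(pr h k).
by rewrite [RHS]scalerA mulrC -scalerA -(pr (g * h)%g k) scalemxAl -(pr g h) mulmxA.
Qed.

Lemma projrep_unique n (U1 U2 : gT -> 'M[C]_n.+1) w1 w2 :
  (forall g, isounit (U1 g)) -> (forall g, isounit (U2 g)) ->
  (forall g A, AdR (U1 g) A = AdR (U2 g) A) ->
  projrep U1 w1 -> projrep U2 w2 -> cohomologous w1 w2.
Proof.
move=> u1 u2 H p1 p2.
have [c hc] := choice (fun g => adj_eq_scal (u1 g) (u2 g) (H g)).
exists c; split => [g|g h]; first by case: (hc g).
have [_ e] := hc g; have [_ e'] := hc h; have [n1 e''] := hc (g * h)%g.
have ne := norm1_neq0 n1.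
have [x1 _] := u1 (g * h)%g.
have E : w2 g h * c (g * h)%g = w1 g h * (c g * c h).
  apply: (scal_inj x1); rewrite -scalerA -e'' -p2 e e'.
  by rewrite -scalemxAl -scalemxAr p1 !scalerA mulrC.
by apply: (mulIf ne); rewrite E mulrA divfK.
Qed.

Lemma coh_refl (w : gT -> gT -> C) : cohomologous w w.
Proof. by exists (fun _ => 1); split => [g|g h]; rewrite ?normr1 // mulr1 invr1 !mulr1. Qed.

Lemma coh_sym (w w' : gT -> gT -> C) : cohomologous w w' -> cohomologous w' w.
Proof.
case=> mu [n1 e]; exists (fun g => (mu g)^-1); split => [g|g h].
  by rewrite normfV n1 invr1.
have := norm1_neq0 (n1 g); have := norm1_neq0 (n1 h); have := norm1_neq0 (n1 (g * h)%g).
by move=> a b c; rewrite e; field; rewrite a b c.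
Qed.

Lemma coh_trans (w1 w2 w3 : gT -> gT -> C) :
  cohomologous w1 w2 -> cohomologous w2 w3 -> cohomologous w1 w3.
Proof.
case=> mu [n1 e1] [nu [n2 e2]]; exists (fun g => mu g * nu g); split => [g|g h].
  by rewrite normrM n1 n2 mulr1.
rewrite e2 e1 -!mulrA; congr (_ * _).
by rewrite invfM; ring.
Qed.

Lemma star_iso_ext N N' (f f' : 'M[C]_N -> 'M[C]_N') :
  (forall A, f A = f' A) -> star_iso f' -> star_iso f.
Proof.
move=> E [h1 h2 h3 h4 h5]; split.
- by move=> a A B; rewrite !E h1.
- by move=> A B; rewrite !E h2.
- by rewrite E h3.
- by move=> A; rewrite !E h4.
by apply: (eq_bij h5) => A; rewrite E.
Qed.

Lemma LPS_of_projrep n (U : gT -> 'M[C]_n) w (beta : gT -> 'M[C]_n -> 'M[C]_n) :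
  (0 < n)%N -> (forall g, isounit (U g)) -> projrep U w -> (forall g h, `|w g h| = 1) ->
  (forall g A, beta g A = AdR (U g) A) -> is_LPS beta.
Proof.
move=> hn u p nw E; split => //.
- by move=> g; apply: (star_iso_ext (E g)); apply: star_iso_AdR.
- move=> A; rewrite E.
  have [x1 _] := u 1%g.
  have U1 : U 1%g = w 1%g 1%g *: 1%:M.
    have := congr1 (mulmx (adjmx (U 1%g))) (p 1%g 1%g).
    by rewrite mulmxA x1 mul1mx mulg1 -scalemxAr x1.
  rewrite /AdR U1 adjmxZ adjmx1 -scalemxAl mul1mx -scalemxAr mulmx1 scalerA.
  by rewrite (_ : _ * _ = 1) ?scale1r //; first [apply: norm1_cc | apply: norm1_cc'].
- move=> g h A; rewrite !E.
  have [x1 _] := u (g * h)%g.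
  have V : U (g * h)%g = (w g h)^* *: (U g *m U h).
    by rewrite p scalerA norm1_cc ?scale1r.
  rewrite /AdR V adjmxZ -scalemxAl -scalemxAl -scalemxAr scalerA.
  rewrite conjCK (_ : _ * _ = 1) ?scale1r ?adjmxM ?mulmxA //.
  by first [apply: norm1_cc | apply: norm1_cc'].
Qed.
End Grp.

Section Tens.
Variable R : realType.
Local Notation C := (R[i]).

Lemma big_mxtens m n p q (F : 'I_(m * n) -> 'M[C]_(p,q)) :
  \sum_(k < m * n) F k = \sum_(i < m) \sum_(j < n) F (mxtens_index (i, j)).
Proof.
rewrite pair_big /=; apply: reindex => /=.
by exists (@mxtens_unindex m n) => k _; rewrite (mxtens_indexK, mxtens_unindexK) //; case: k.
Qed.

Lemma mxtens_index_eq m n (i i' : 'I_m) (j j' : 'I_n) :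
  (mxtens_index (i, j) == mxtens_index (i', j')) = (i == i') && (j == j').
Proof. by rewrite (inj_eq (can_inj (@mxtens_indexK m n))). Qed.

Lemma tensmx_delta m n p q (i : 'I_m) (k : 'I_n) (j : 'I_p) (l : 'I_q) :
  (delta_mx i k : 'M[C]_(m,n)) *t (delta_mx j l : 'M[C]_(p,q)) =
  delta_mx (mxtens_index (i, j)) (mxtens_index (k, l)).
Proof.
apply/matrixP => a b.
case: (mxtens_indexP a) => a1 a2; case: (mxtens_indexP b) => b1 b2.
rewrite tensmxE !mxE !mxtens_index_eq -natrM mulnb.
by congr (_%:R); case: (a1 == i); case: (a2 == j); case: (b1 == k); case: (b2 == l).
Qed.

Lemma tensmx11 m n : (1%:M : 'M[C]_m) *t (1%:M : 'M[C]_n) = 1%:M.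
Proof.
apply/matrixP => a b.
case: (mxtens_indexP a) => a1 a2; case: (mxtens_indexP b) => b1 b2.
by rewrite tensmxE !mxE mxtens_index_eq -natrM mulnb.
Qed.

Lemma tensmxDl m n p q (A B : 'M[C]_(m,n)) (D : 'M[C]_(p,q)) :
  (A + B) *t D = A *t D + B *t D.
Proof. by apply/matrixP => a b; rewrite !mxE mulrDl. Qed.

Lemma tensmxDr m n p q (A : 'M[C]_(m,n)) (B D : 'M[C]_(p,q)) :
  A *t (B + D) = A *t B + A *t D.
Proof. by apply/matrixP => a b; rewrite !mxE mulrDr. Qed.

Lemma tensmxZl m n p q c (A : 'M[C]_(m,n)) (D : 'M[C]_(p,q)) :
  (c *: A) *t D = c *: (A *t D).
Proof. by apply/matrixP => a b; rewrite !mxE mulrA. Qed.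

Lemma tensmxZr m n p q c (A : 'M[C]_(m,n)) (D : 'M[C]_(p,q)) :
  A *t (c *: D) = c *: (A *t D).
Proof. by apply/matrixP => a b; rewrite !mxE mulrCA. Qed.

Lemma tensmx_suml m n p q I (r : seq I) (P : pred I) (F : I -> 'M[C]_(m,n)) (D : 'M[C]_(p,q)) :
  (\sum_(i <- r | P i) F i) *t D = \sum_(i <- r | P i) (F i *t D).
Proof. by apply: (big_morph (fun A => A *t D)) => [A B|]; rewrite ?tensmxDl ?tens0mx. Qed.

Lemma tensmx_sumr m n p q I (r : seq I) (P : pred I) (A : 'M[C]_(m,n)) (F : I -> 'M[C]_(p,q)) :
  A *t (\sum_(i <- r | P i) F i) = \sum_(i <- r | P i) (A *t F i).
Proof. by apply: (big_morph (fun D => A *t D)) => [B D|]; rewrite ?tensmxDr ?tensmx0. Qed.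

Lemma isounit_tens m n p q (Y : 'M[C]_(m,n)) (Z : 'M[C]_(p,q)) :
  isounit Y -> isounit Z -> isounit (Y *t Z).
Proof.
by case=> y1 y2 [z1 z2]; split; rewrite adjmx_tens tensmx_mul ?y1 ?z1 ?y2 ?z2 tensmx11.
Qed.

Lemma AdR_sum N' N (W : 'M[C]_(N',N)) I (r : seq I) (P : pred I) F :
  AdR W (\sum_(i <- r | P i) F i) = \sum_(i <- r | P i) AdR W (F i).
Proof. by rewrite /AdR mulmx_sumr mulmx_suml. Qed.

Lemma AdRZ N' N (W : 'M[C]_(N',N)) c A : AdR W (c *: A) = c *: AdR W A.
Proof. by rewrite /AdR -scalemxAr -scalemxAl. Qed.

Lemma AdR_tens m n p q (U : 'M[C]_(m,n)) (V : 'M[C]_(p,q)) A B :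
  AdR U A *t AdR V B = AdR (U *t V) (A *t B).
Proof. by rewrite /AdR adjmx_tens !tensmx_mul. Qed.

Lemma tens_map_Ad n m (f : 'M[C]_n -> 'M[C]_n) (f' : 'M[C]_m -> 'M[C]_m) U U' X :
  (forall A, f A = AdR U A) -> (forall B, f' B = AdR U' B) ->
  tens_map f f' X = AdR (U *t U') X.
Proof.
move=> Ef Ef'.
rewrite {2}(matrix_sum_delta X) AdR_sum big_mxtens /tens_map.
apply: eq_bigr => i _; rewrite exchange_big /=; apply: eq_bigr => j _.
rewrite AdR_sum big_mxtens; apply: eq_bigr => k _; apply: eq_bigr => l _.
by rewrite AdRZ Ef Ef' AdR_tens tensmx_delta.
Qed.
End Tens.

Section Intw.
Variable R : realType.
Local Notation C := (R[i]).
Variable gT : finGroupType.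

Definition intw {N N'} (S : gT -> 'M[C]_N) (T : gT -> 'M[C]_N') :=
  exists (Z : 'M[C]_(N',N)) (phi : gT -> C),
    isounit Z /\ forall g, `|phi g| = 1 /\ T g *m Z = phi g *: (Z *m S g).

Lemma intw_refl N (S : gT -> 'M[C]_N) : intw S S.
Proof.
exists 1%:M, (fun _ => 1); split.
  by split; rewrite adjmx1 mulmx1.
by move=> g; rewrite normr1 scale1r mulmx1 mul1mx.
Qed.

Lemma intw_sym N N' (S : gT -> 'M[C]_N) (T : gT -> 'M[C]_N') : intw S T -> intw T S.
Proof.
case=> Z [phi [[z1 z2] H]].
exists (adjmx Z), (fun g => (phi g)^*); split; first exact: isounit_adj.
move=> g; have [n1 e] := H g; split; first by rewrite norm_conjC.
have : adjmx Z *m T g *m Z *m adjmx Z = phi g *: (S g *m adjmx Z).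
  by rewrite -(mulmxA _ (T g)) e -scalemxAr mulmxA z1 mul1mx -scalemxAl.
rewrite -mulmxA z2 mulmx1 => ->.
rewrite scalerA (_ : _ * _ = 1) ?scale1r //.
by first [apply: norm1_cc | apply: norm1_cc'].
Qed.

Lemma intw_trans N1 N2 N3 (S1 : gT -> 'M[C]_N1) (S2 : gT -> 'M[C]_N2) (S3 : gT -> 'M[C]_N3) :
  intw S1 S2 -> intw S2 S3 -> intw S1 S3.
Proof.
case=> Z1 [phi1 [u1 H1]] [Z2 [phi2 [u2 H2]]].
exists (Z2 *m Z1), (fun g => phi2 g * phi1 g); split; first exact: isounit_mul.
move=> g; have [h1 e1] := H1 g; have [h2 e2] := H2 g; split.
  by rewrite normrM h1 h2 mulr1.
rewrite mulmxA e2 -scalemxAl -mulmxA e1 -scalemxAr scalerA mulmxA.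
by [].
Qed.

Lemma intw_tens n1 n2 m1 m2 (S : gT -> 'M[C]_n1) (T : gT -> 'M[C]_n2)
  (S' : gT -> 'M[C]_m1) (T' : gT -> 'M[C]_m2) :
  intw S T -> intw S' T' -> intw (fun g => S g *t S' g) (fun g => T g *t T' g).
Proof.
case=> Z [phi [u H]] [Z' [phi' [u' H']]].
exists (Z *t Z'), (fun g => phi g * phi' g); split; first exact: isounit_tens.
move=> g; have [h1 e1] := H g; have [h2 e2] := H' g; split.
  by rewrite normrM h1 h2 mulr1.
by rewrite !tensmx_mul e1 e2 tensmxZl tensmxZr scalerA.
Qed.

Definition pmx {N' N} (s : 'I_N' -> 'I_N) : 'M[C]_(N',N) :=
  \matrix_(a, b) (b == s a)%:R.

Lemma pmx_mull N' N p (s : 'I_N' -> 'I_N) (M : 'M[C]_(N,p)) a c :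
  (pmx s *m M) a c = M (s a) c.
Proof.
rewrite mxE (bigD1 (s a)) //= big1 ?addr0; first by rewrite mxE eqxx mul1r.
by move=> b /negbTE nb; rewrite mxE nb mul0r.
Qed.

Lemma pmx_mulr N' N m (s : 'I_N' -> 'I_N) (t : 'I_N -> 'I_N') (M : 'M[C]_(m,N')) a c :
  cancel s t -> cancel t s -> (M *m pmx s) a c = M a (t c).
Proof.
move=> st ts.
rewrite mxE (bigD1 (t c)) //= big1 ?addr0; first by rewrite mxE ts eqxx mulr1.
move=> b nb; rewrite mxE; case: eqP => [E|]; last by rewrite mulr0.
by move: nb; rewrite E st eqxx.
Qed.

Lemma isounit_pmx N' N (s : 'I_N' -> 'I_N) (t : 'I_N -> 'I_N') :
  cancel s t -> cancel t s -> isounit (pmx s).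
Proof.
move=> st ts.
have E : adjmx (pmx s) = pmx t.
  apply/matrixP => a b; rewrite adjmxE !mxE rmorph_nat.
  congr (_%:R); case: (a =P s b) => [->|ne]; first by rewrite st eqxx.
  by case: (b =P t a) => // E; case: ne; rewrite E ts.
split; rewrite E; apply/matrixP => a c; rewrite pmx_mull !mxE.
  by rewrite ts eq_sym.
by rewrite st eq_sym.
Qed.

Lemma intw_perm N N' (S : gT -> 'M[C]_N) (T : gT -> 'M[C]_N')
  (s : 'I_N' -> 'I_N) (t : 'I_N -> 'I_N') :
  cancel s t -> cancel t s ->
  (forall g a c, T g a (t c) = S g (s a) c) -> intw S T.
Proof.
move=> st ts H; exists (pmx s), (fun _ => 1); split; first exact: isounit_pmx st ts.
move=> g; split; first by rewrite normr1.
by rewrite scale1r; apply/matrixP => a c; rewrite pmx_mull (pmx_mulr _ _ _ st ts) H.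
Qed.

Definition swap_idx m n (a : 'I_(m * n)) : 'I_(n * m) :=
  mxtens_index ((mxtens_unindex a).2, (mxtens_unindex a).1).

Lemma swap_idxK m n : cancel (@swap_idx m n) (@swap_idx n m).
Proof.
move=> a; case: (mxtens_indexP a) => i j.
by rewrite /swap_idx !mxtens_indexK.
Qed.

Lemma intw_comm n m (A : gT -> 'M[C]_n) (B : gT -> 'M[C]_m) :
  intw (fun g => A g *t B g) (fun g => B g *t A g).
Proof.
apply: (@intw_perm _ _ _ _ (@swap_idx m n) (@swap_idx n m)); try exact: swap_idxK.
move=> g a c.
case: (mxtens_indexP a) => j i; case: (mxtens_indexP c) => k l.
by rewrite /swap_idx !mxtens_indexK /= !tensmxE mulrC.
Qed.

Definition assoc_idx n m p (a : 'I_(n * (m * p))) : 'I_(n * m * p) :=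
  mxtens_index (mxtens_index ((mxtens_unindex a).1,
    (mxtens_unindex (mxtens_unindex a).2).1), (mxtens_unindex (mxtens_unindex a).2).2).

Definition unassoc_idx n m p (a : 'I_(n * m * p)) : 'I_(n * (m * p)) :=
  mxtens_index ((mxtens_unindex (mxtens_unindex a).1).1,
    mxtens_index ((mxtens_unindex (mxtens_unindex a).1).2, (mxtens_unindex a).2)).

Lemma assoc_idxK n m p : cancel (@assoc_idx n m p) (@unassoc_idx n m p).
Proof.
move=> a; case: (mxtens_indexP a) => i b; case: (mxtens_indexP b) => j k.
by rewrite /assoc_idx /unassoc_idx !mxtens_indexK.
Qed.

Lemma unassoc_idxK n m p : cancel (@unassoc_idx n m p) (@assoc_idx n m p).
Proof.
move=> a; case: (mxtens_indexP a) => b k; case: (mxtens_indexP b) => i j.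
by rewrite /assoc_idx /unassoc_idx !mxtens_indexK.
Qed.

Lemma intw_assoc n m p (A : gT -> 'M[C]_n) (B : gT -> 'M[C]_m) (D : gT -> 'M[C]_p) :
  intw (fun g => (A g *t B g) *t D g) (fun g => A g *t (B g *t D g)).
Proof.
apply: (@intw_perm _ _ _ _ (@assoc_idx n m p) (@unassoc_idx n m p));
  [exact: assoc_idxK | exact: unassoc_idxK |].
move=> g a c.
case: (mxtens_indexP a) => i b; case: (mxtens_indexP b) => j k.
case: (mxtens_indexP c) => b' k'; case: (mxtens_indexP b') => i' j'.
by rewrite /assoc_idx /unassoc_idx !mxtens_indexK !tensmxE mulrA.
Qed.
End Intw.

Section Reps.
Variable R : realType.
Local Notation C := (R[i]).
Variable gT : finGroupType.
Local Notation rk := (@enum_rank gT).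

Lemma delta_rk_mul m p (i : 'I_m) (k : 'I_p) (x y : gT) :
  delta_mx i (rk x) *m delta_mx (rk y) k = (x == y)%:R *: (delta_mx i k : 'M[C]_(m,p)).
Proof.
case: eqP => [->|ne]; first by rewrite mul_delta_mx scale1r.
rewrite scale0r mul_delta_mx_0 //.
by apply/negP => /eqP /enum_rank_inj.
Qed.

Lemma sum_collapse m n (M : gT -> 'M[C]_(m,n)) (F : gT -> C) x :
  \sum_y (F y * (y == x)%:R) *: M y = F x *: M x.
Proof.
rewrite (bigD1 x) //= eqxx mulr1 big1 ?addr0 // => y /negbTE ->.
by rewrite mulr0 scale0r.
Qed.

Lemma sum_collapse' m n (M : gT -> 'M[C]_(m,n)) (F : gT -> C) x :
  \sum_y (F y * (x == y)%:R) *: M y = F x *: M x.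
Proof. by rewrite -(sum_collapse M F x); apply: eq_bigr => y _; rewrite eq_sym. Qed.

Lemma sum_delta_rk : \sum_(y : gT) delta_mx (rk y) (rk y) = 1%:M :> 'M[C]_#|gT|.
Proof.
rewrite mx1_sum_delta (reindex rk) //=.
by exists enum_val => i _; rewrite (enum_rankK, enum_valK).
Qed.

Definition Rw (w : gT -> gT -> C) g : 'M[C]_#|gT| :=
  \sum_(y : gT) w g y *: delta_mx (rk (g * y)%g) (rk y).

Lemma Rw_mul w : (forall g h k, w h k * w g (h * k)%g = w (g * h)%g k * w g h) ->
  projrep (Rw w) w.
Proof.
move=> coc g h.
rewrite /Rw mulmx_suml.
under eq_bigr => y _ do rewrite mulmx_sumr.
rewrite exchange_big /= scaler_sumr; apply: eq_bigr => z _.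
under eq_bigr => y _ do rewrite -scalemxAl -scalemxAr scalerA delta_rk_mul scalerA.
rewrite sum_collapse scalerA mulgA; congr (_ *: _).
by rewrite mulrC coc mulrC.
Qed.

Lemma adj_Rw w g : adjmx (Rw w g) = \sum_y (w g y)^* *: delta_mx (rk y) (rk (g * y)%g).
Proof.
rewrite /Rw adjmx_sum; apply: eq_bigr => y _.
by rewrite adjmxZ adjmx_delta.
Qed.

Lemma Rw_unit w : (forall g h, `|w g h| = 1) -> forall g, isounit (Rw w g).
Proof.
move=> nw g; split.
  rewrite adj_Rw /Rw mulmx_suml -sum_delta_rk; apply: eq_bigr => y _.
  rewrite mulmx_sumr.
  under eq_bigr => z _ do rewrite -scalemxAl -scalemxAr scalerA delta_rk_mul scalerA.
  rewrite (eq_bigr (fun z => ((w g y)^* * w g z * (z == y)%:R) *: delta_mx (rk y) (rk z))).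
    by rewrite sum_collapse norm1_cc ?scale1r.
  move=> z _; congr ((_ * _) *: _); rewrite (inj_eq (mulgI g)) eq_sym //.
rewrite adj_Rw /Rw mulmx_suml -sum_delta_rk [RHS](reindex_inj (mulgI g)) /=.
apply: eq_bigr => y _; rewrite mulmx_sumr.
under eq_bigr => z _ do rewrite -scalemxAl -scalemxAr scalerA delta_rk_mul scalerA.
by rewrite sum_collapse' norm1_cc' ?scale1r.
Qed.

Definition Lreg g : 'M[C]_#|gT| := Rw (fun _ _ => 1) g.

Lemma Lreg_projrep : projrep Lreg (fun _ _ => 1).
Proof. by apply: Rw_mul => *; rewrite mulr1. Qed.

Lemma Lreg_unit g : isounit (Lreg g).
Proof. by apply: Rw_unit => *; rewrite normr1. Qed.

Lemma Lreg1 : Lreg 1%g = 1%:M.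
Proof.
rewrite /Lreg /Rw -sum_delta_rk; apply: eq_bigr => y _.
by rewrite scale1r mul1g.
Qed.
End Reps.

Section Fell.
Variable R : realType.
Local Notation C := (R[i]).
Variable gT : finGroupType.
Local Notation rk := (@enum_rank gT).

Lemma sum_collapse1 m n (M : gT -> 'M[C]_(m,n)) x :
  \sum_y (x == y)%:R *: M y = M x.
Proof.
rewrite -[RHS]scale1r -(sum_collapse' M (fun _ => 1) x).
by apply: eq_bigr => y _; rewrite mul1r.
Qed.

Lemma sum_collapse1' m n (M : gT -> 'M[C]_(m,n)) x :
  \sum_y (y == x)%:R *: M y = M x.
Proof. by rewrite -[RHS](sum_collapse1 M x); apply: eq_bigr => y _; rewrite eq_sym. Qed.

Lemma Fell n (U : gT -> 'M[C]_n) w :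
  (forall g, isounit (U g)) -> projrep U w ->
  intw (fun g => U g *t Lreg R g) (fun g => (1%:M : 'M[C]_n) *t Rw w g).
Proof.
move=> Uu pU.
pose Z := \sum_(x : gT) adjmx (U x) *t (delta_mx (rk x) (rk x) : 'M[C]_#|gT|).
have ZA : adjmx Z = \sum_(x : gT) U x *t delta_mx (rk x) (rk x).
  by rewrite /Z adjmx_sum; apply: eq_bigr => x _; rewrite adjmx_tens adjmxK adjmx_delta.
exists Z, (fun _ => 1); split.
  split.
    rewrite ZA /Z mulmx_suml -tensmx11 -sum_delta_rk tensmx_sumr.
    apply: eq_bigr => x _; rewrite mulmx_sumr.
    under eq_bigr => y _ do rewrite tensmx_mul delta_rk_mul tensmxZr.
    by rewrite sum_collapse1; case: (Uu x) => _ ->.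
  rewrite ZA /Z mulmx_suml -tensmx11 -sum_delta_rk tensmx_sumr.
  apply: eq_bigr => x _; rewrite mulmx_sumr.
  under eq_bigr => y _ do rewrite tensmx_mul delta_rk_mul tensmxZr.
  by rewrite sum_collapse1; case: (Uu x) => ->.
move=> g; split; first by rewrite normr1.
rewrite scale1r /Z mulmx_suml mulmx_sumr.
rewrite (eq_bigr (fun y => adjmx (U y) *t (w g y *: delta_mx (rk (g * y)%g) (rk y)))); last first.
  move=> y _; rewrite tensmx_mul mul1mx /Rw mulmx_suml.
  under eq_bigr => z _ do rewrite -scalemxAl delta_rk_mul scalerA.
  by rewrite sum_collapse.
under [RHS]eq_bigr => x _ do rewrite tensmx_mul /Lreg /Rw mulmx_sumr tensmx_sumr.
rewrite exchange_big /=; apply: eq_bigr => y _.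
under eq_bigr => x _ do rewrite scale1r delta_rk_mul tensmxZr.
rewrite sum_collapse1' tensmxZr -tensmxZl; congr (_ *t _).
have [_ u2] := Uu y.
rewrite -[RHS]mulmx1 -u2 mulmxA -(mulmxA _ (U g)) pU -scalemxAr -scalemxAl.
by case: (Uu (g * y)%g) => -> _; rewrite mul1mx.
Qed.

Lemma twist (w w' : gT -> gT -> C) : cohomologous w w' -> intw (Rw w') (Rw w).
Proof.
case=> mu [nmu e].
pose D := \sum_(y : gT) mu y *: (delta_mx (rk y) (rk y) : 'M[C]_#|gT|).
have DA : adjmx D = \sum_(y : gT) (mu y)^* *: delta_mx (rk y) (rk y).
  by rewrite /D adjmx_sum; apply: eq_bigr => y _; rewrite adjmxZ adjmx_delta.
exists D, (fun g => (mu g)^-1); split.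
  split.
    rewrite DA /D mulmx_suml -sum_delta_rk; apply: eq_bigr => y _.
    rewrite mulmx_sumr.
    under eq_bigr => z _ do rewrite -scalemxAl -scalemxAr scalerA delta_rk_mul scalerA.
    by rewrite sum_collapse' norm1_cc ?scale1r.
  rewrite DA /D mulmx_suml -sum_delta_rk; apply: eq_bigr => y _.
  rewrite mulmx_sumr.
  under eq_bigr => z _ do rewrite -scalemxAl -scalemxAr scalerA delta_rk_mul scalerA.
  by rewrite sum_collapse' norm1_cc' ?scale1r.
move=> g; split; first by rewrite normfV nmu invr1.
rewrite /Rw /D [LHS]mulmx_suml.
under eq_bigr => y _ do rewrite mulmx_sumr.
rewrite [in RHS]mulmx_sumr [RHS]scaler_sumr.
under [RHS]eq_bigr => z _ do rewrite mulmx_suml scaler_sumr.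
apply: eq_bigr => y _.
under eq_bigr => z _ do rewrite -scalemxAl -scalemxAr scalerA delta_rk_mul scalerA.
under [RHS]eq_bigr => z _ do rewrite -scalemxAl -scalemxAr scalerA delta_rk_mul !scalerA ?mulrA.
rewrite sum_collapse' sum_collapse; congr (_ *: _).
have := norm1_neq0 (nmu g); have := norm1_neq0 (nmu y); have := norm1_neq0 (nmu (g * y)%g).
by move=> a b c; rewrite e; field; rewrite ?a ?b ?c.
Qed.
End Fell.

Section Main.
Variable R : realType.
Local Notation C := (R[i]).
Variable gT : finGroupType.

Lemma LPS_equiv_of_intw N N' (beta : gT -> 'M[C]_N -> 'M[C]_N)
  (beta' : gT -> 'M[C]_N' -> 'M[C]_N') S T :
  intw S T -> (forall g A, beta g A = AdR (S g) A) ->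
  (forall g A, beta' g A = AdR (T g) A) -> LPS_equiv beta beta'.
Proof.
case=> Z [phi [uZ H]] Eb Eb'.
exists (AdR Z), 1%:M; split.
- exact: star_iso_AdR.
- by split; rewrite adjmx1 mulmx1.
move=> g A; rewrite /Ad !adjmx1 !mul1mx !mulmx1 Eb Eb'.
have [n1 e] := H g.
rewrite /AdR !mulmxA e -(mulmxA _ (adjmx Z)) -adjmxM e adjmxZ adjmxM.
rewrite -!scalemxAl -scalemxAr scalerA (_ : _ * _ = 1) ?scale1r; last first.
  by first [apply: norm1_cc | apply: norm1_cc'].
by rewrite !mulmxA.
Qed.

Definition OmegaP n (beta : gT -> 'M[C]_n -> 'M[C]_n) (w : gT -> gT -> C) : Prop :=
  exists U : gT -> 'M[C]_n,
    [/\ forall g, isounit (U g), forall g A, beta g A = AdR (U g) A,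
        projrep U w & U1_2cocycle w].

Definition Omega n (beta : gT -> 'M[C]_n -> 'M[C]_n) : gT -> gT -> C :=
  match pselect (exists w, OmegaP beta w) with
  | left h => proj1_sig (cid h)
  | right _ => fun _ _ => 1
  end.

Lemma OmegaP_spec n (beta : gT -> 'M[C]_n -> 'M[C]_n) :
  (exists w, OmegaP beta w) -> OmegaP beta (Omega beta).
Proof.
move=> h; rewrite /Omega; case: pselect => // h'.
exact: (proj2_sig (cid h')).
Qed.

Lemma LPS_has n (beta : gT -> 'M[C]_n -> 'M[C]_n) :
  is_LPS beta -> exists w, OmegaP beta w.
Proof.
case: n beta => [|n] beta [] // _ si b1 bM.
have [U hU] := choice (fun g => SN (si g)).
have uU g : isounit (U g) by case: (hU g).
have EU g A : beta g A = AdR (U g) A by case: (hU g) => _ ->.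
have [w [pw cw]] : exists w, projrep U w /\ U1_2cocycle w.
  apply: cocycle_of => // g h A.
  by rewrite -!EU bM.
by exists w, U.
Qed.

Lemma projrep_unique' N (U1 U2 : gT -> 'M[C]_N) w1 w2 :
  (0 < N)%N -> (forall g, isounit (U1 g)) -> (forall g, isounit (U2 g)) ->
  (forall g A, AdR (U1 g) A = AdR (U2 g) A) ->
  projrep U1 w1 -> projrep U2 w2 -> cohomologous w1 w2.
Proof.
case: N U1 U2 => [|N] U1 U2 // _.
exact: projrep_unique.
Qed.

Lemma projrep_tens n m (U : gT -> 'M[C]_n) (W : gT -> 'M[C]_m) w w' :
  projrep U w -> projrep W w' ->
  projrep (fun g => U g *t W g) (fun g h => w g h * w' g h).
Proof.
move=> pU pW g h.
by rewrite tensmx_mul pU pW tensmxZl tensmxZr scalerA.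
Qed.

Lemma cocycle_mul2 (w w' : gT -> gT -> C) :
  U1_2cocycle w -> U1_2cocycle w' -> U1_2cocycle (fun g h => w g h * w' g h).
Proof.
case=> n1 c1 [n2 c2]; split.
  by move=> g h; rewrite normrM n1 n2 mulr1.
by move=> g h k; rewrite mulrACA c1 c2 mulrACA.
Qed.

Lemma equiv_coh N N' (beta : gT -> 'M[C]_N -> 'M[C]_N)
  (beta' : gT -> 'M[C]_N' -> 'M[C]_N') S T w w' :
  (0 < N)%N -> (forall g, isounit (S g)) -> (forall g, isounit (T g)) ->
  (forall g A, beta g A = AdR (S g) A) -> (forall g A, beta' g A = AdR (T g) A) ->
  projrep S w -> projrep T w' -> LPS_equiv beta beta' -> cohomologous w w'.
Proof.
case: N beta S => [|N] beta S // _ uS uT ES ET pS pT [iota [V [si uV H]]].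
have [Y [uY EY]] := SN si.
pose Z := adjmx V *m Y.
have uZ : isounit Z.
  by apply: isounit_mul => //; apply: isounit_adj; apply/unitary_isounit.
have H' g A : AdR (T g) (AdR Z A) = AdR Z (AdR (S g) A).
  have := H g A; rewrite ET !EY ES /Ad /AdR adjmxM adjmxK !mulmxA => ->.
  by [].
clearbody Z.
pose Q g := adjmx Z *m T g *m Z.
case: uZ => z1 z2.
apply: (@projrep_unique' _ S Q) => //.
- move=> g; apply: isounit_mul; last by [].
  by apply: isounit_mul; [apply: isounit_adj|].
- move=> g A; rewrite /Q /AdR.
  have := congr1 (fun M => adjmx Z *m M *m Z) (H' g A); rewrite /AdR /=.
  rewrite !adjmxM adjmxK !mulmxA z1 mul1mx -!mulmxA z1 mulmx1 => ->.
  by rewrite !mulmxA.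
move=> g h; rewrite /Q !mulmxA -(mulmxA _ Z) z2 mulmx1 -(mulmxA _ (T g)) pT.
by rewrite -scalemxAr -!scalemxAl.
Qed.

Lemma stab_of_coh n n' (beta : gT -> 'M[C]_n -> 'M[C]_n)
  (beta' : gT -> 'M[C]_n' -> 'M[C]_n') U U' w w' :
  (0 < n)%N -> (0 < n')%N ->
  (forall g, isounit (U g)) -> (forall g, isounit (U' g)) ->
  (forall g A, beta g A = AdR (U g) A) -> (forall g A, beta' g A = AdR (U' g) A) ->
  projrep U w -> projrep U' w' -> U1_2cocycle w -> U1_2cocycle w' ->
  cohomologous w w' -> stably_equiv beta beta'.
Proof.
move=> hn hn' uU uU' EU EU' pU pU' cw cw' coh.
have G0 : (0 < #|gT|)%N := leq_ltn_trans (leq0n _) (ltn_ord (enum_rank (1%g : gT))).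
have onsite k : (0 < k)%N ->
    is_onsite (fun g : gT => Ad (Lreg R g *t (1%:M : 'M[C]_k))).
  move=> hk.
  have u (g : gT) : isounit (Lreg R g *t (1%:M : 'M[C]_k)).
    apply: isounit_tens; first exact: Lreg_unit.
    by split; rewrite adjmx1 mulmx1.
  have p : projrep (fun g : gT => Lreg R g *t (1%:M : 'M[C]_k)) (fun _ _ => 1).
    by move=> g h /=; rewrite tensmx_mul Lreg_projrep mulmx1 tensmxZl.
  split.
    apply: (LPS_of_projrep (U := fun g : gT => Lreg R g *t (1%:M : 'M[C]_k))
      (w := fun _ _ => 1)) => //.
    - by rewrite muln_gt0 G0.
    - by move=> *; rewrite normr1.
  exists (fun g : gT => Lreg R g *t (1%:M : 'M[C]_k)); split => //.
  - by move=> g; apply/unitary_isounit.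
  - by rewrite Lreg1 tensmx11.
  - by move=> g h; rewrite p scale1r.
exists (#|gT| * n')%N, (#|gT| * n)%N,
  (fun g : gT => Ad (Lreg R g *t (1%:M : 'M[C]_n'))),
  (fun g : gT => Ad (Lreg R g *t (1%:M : 'M[C]_n))); split; try exact: onsite.
case: cw => nw cw; case: cw' => nw' cw'.
have chain k (V : gT -> 'M[C]_k) v : (forall g, isounit (V g)) -> projrep V v ->
    forall j, intw (fun g => V g *t (Lreg R g *t (1%:M : 'M[C]_j)))
                   (fun g => Rw v g *t ((1%:M : 'M[C]_k) *t (1%:M : 'M[C]_j))).
  move=> uV pV j.
  apply: intw_trans; first exact: intw_sym (intw_assoc _ _ _).
  apply: intw_trans.
    apply: (intw_tens (Fell uV pV) (intw_refl (fun _ => (1%:M : 'M[C]_j)))).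
  apply: intw_trans; last exact: intw_assoc.
  apply: (intw_tens _ (intw_refl (fun _ => (1%:M : 'M[C]_j)))).
  exact: (intw_comm (fun _ => (1%:M : 'M[C]_k)) (Rw v)).
apply: (LPS_equiv_of_intw (S := fun g => U g *t (Lreg R g *t (1%:M : 'M[C]_n'))) 
                          (T := fun g => U' g *t (Lreg R g *t (1%:M : 'M[C]_n)))).
- apply: intw_trans; first exact: chain.
  apply: intw_trans; last exact: intw_sym (chain _ _ _ uU' pU' n).
  apply: intw_tens; last exact: (intw_comm (fun _ => (1%:M : 'M[C]_n)) (fun _ => (1%:M : 'M[C]_n'))).
  by apply: twist; apply: coh_sym.
- by move=> g A; rewrite /stack (tens_map_Ad (U := U g) (U' := Lreg R g *t 1%:M)).
- by move=> g A; rewrite /stack (tens_map_Ad (U := U' g) (U' := Lreg R g *t 1%:M)).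
Qed.
End Main.

Section Conj.
Variable R : realType.
Local Notation C := (R[i]).

Lemma adjmx_map m n (A : 'M[C]_(m,n)) :
  adjmx (map_mx Num.conj A) = map_mx Num.conj (adjmx A).
Proof. by apply/matrixP => i j; rewrite !(adjmxE, mxE). Qed.

Lemma isounit_map n (A : 'M[C]_n) : isounit A -> isounit (map_mx Num.conj A).
Proof.
case=> a1 a2; split; rewrite adjmx_map -map_mxM ?a1 ?a2; exact: map_mx1.
Qed.
End Conj.

Theorem lemmaA2 (R : realType) (gT : finGroupType) :
  exists Omega : forall n : nat, (gT -> 'M[R[i]]_n -> 'M[R[i]]_n) -> gT -> gT -> R[i],
    [/\ (forall n (beta : gT -> 'M[R[i]]_n -> 'M[R[i]]_n),
           is_LPS beta -> U1_2cocycle (Omega n beta)),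
        (forall n n' (beta : gT -> 'M[R[i]]_n -> 'M[R[i]]_n)
                     (beta' : gT -> 'M[R[i]]_n' -> 'M[R[i]]_n'),
           is_LPS beta -> is_LPS beta' ->
           (stably_equiv beta beta' <-> cohomologous (Omega n beta) (Omega n' beta'))),
        (forall n n' (beta : gT -> 'M[R[i]]_n -> 'M[R[i]]_n)
                     (beta' : gT -> 'M[R[i]]_n' -> 'M[R[i]]_n'),
           is_LPS beta -> is_LPS beta' ->
           cohomologous (Omega (n * n')%N (stack beta beta'))
                        (cocycle_mul (Omega n beta) (Omega n' beta'))),
        (forall w : gT -> gT -> R[i], U1_2cocycle w ->
           exists n (beta : gT -> 'M[R[i]]_n -> 'M[R[i]]_n),
             is_LPS beta /\ cohomologous (Omega n beta) w)
      & (forall n (beta : gT -> 'M[R[i]]_n -> 'M[R[i]]_n), is_LPS beta ->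
           exists n' (beta' : gT -> 'M[R[i]]_n' -> 'M[R[i]]_n'),
             is_LPS beta' /\ stably_equiv (stack beta beta') (@trivial_LPS R gT))].
Proof.
have G0 : (0 < #|gT|)%N := leq_ltn_trans (leq0n _) (ltn_ord (enum_rank (1%g : gT))).
exists (fun n beta => @Omega R gT n beta); split.
- move=> n beta hb; have [U [_ _ _ c]] := OmegaP_spec (LPS_has hb); exact: c.
- move=> n n' beta beta' hb hb'.
  have [U [uU EU pU cU]] := OmegaP_spec (LPS_has hb).
  have [U' [uU' EU' pU' cU']] := OmegaP_spec (LPS_has hb').
  have hn : (0 < n)%N by case: hb.
  have hn' : (0 < n')%N by case: hb'.
  split.
    case=> m [m' [delta [delta' [[hd [W [uW W1 WM EW]]] [hd' [W' [uW' W1' WM' EW']]] eq]]]].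
    have hm : (0 < m)%N by case: hd.
    apply: (@equiv_coh R gT _ _ _ _ (fun g => U g *t W g) (fun g => U' g *t W' g)
      _ _ _ _ _ _ _ _ _ eq).
    + by rewrite muln_gt0 hn hm.
    + by move=> g; apply: isounit_tens => //; apply/unitary_isounit.
    + by move=> g; apply: isounit_tens => //; apply/unitary_isounit.
    + by move=> g A; rewrite /stack (tens_map_Ad (U := U g) (U' := W g)).
    + by move=> g A; rewrite /stack (tens_map_Ad (U := U' g) (U' := W' g)).
    + by move=> g h /=; rewrite tensmx_mul pU WM tensmxZl.
    + by move=> g h /=; rewrite tensmx_mul pU' WM' tensmxZl.
  move=> coh.
  exact: (stab_of_coh hn hn' uU uU' EU EU' pU pU' cU cU' coh).
- move=> n n' beta beta' hb hb'.
  have [U [uU EU pU cU]] := OmegaP_spec (LPS_has hb).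
  have [U' [uU' EU' pU' cU']] := OmegaP_spec (LPS_has hb').
  have hn : (0 < n)%N by case: hb.
  have hn' : (0 < n')%N by case: hb'.
  have ES g A : stack beta beta' g A = AdR (U g *t U' g) A.
    by rewrite /stack (tens_map_Ad (U := U g) (U' := U' g)).
  have ex : exists w, OmegaP (stack beta beta') w.
    exists (fun g h => Omega beta g h * Omega beta' g h), (fun g => U g *t U' g); split.
    + by move=> g; apply: isounit_tens.
    + exact: ES.
    + exact: projrep_tens.
    + exact: cocycle_mul2.
  have [U2 [uU2 EU2 pU2 cU2]] := OmegaP_spec ex.
  apply: (@projrep_unique' R gT _ U2 (fun g => U g *t U' g)) => //.
  + by rewrite muln_gt0 hn hn'.
  + by move=> g; apply: isounit_tens.
  + by move=> g A; rewrite -EU2 ES.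
  + exact: projrep_tens.
- move=> w cw.
  have uR := Rw_unit (proj1 cw).
  have pR := Rw_mul (proj2 cw).
  exists #|gT|, (fun g A => AdR (Rw w g) A); split.
    exact: (LPS_of_projrep G0 uR pR (proj1 cw)).
  have ex : exists w', OmegaP (fun g A => AdR (Rw w g) A) w'.
    by exists w, (Rw w); split.
  have [U2 [uU2 EU2 pU2 cU2]] := OmegaP_spec ex.
  apply: (@projrep_unique' R gT _ U2 (Rw w)) => //.
move=> n beta hb.
have [U [uU EU pU [nw cw]]] := OmegaP_spec (LPS_has hb).
have hn : (0 < n)%N by case: hb.
pose Ub g := map_mx Num.conj (U g).
have uUb g : isounit (Ub g) by apply: isounit_map.
have pUb : projrep Ub (fun g h => (Omega beta g h)^*).
  by move=> g h; rewrite /Ub -map_mxM pU map_mxZ.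
have cUb : U1_2cocycle (fun g h => (Omega beta g h)^*).
  split; first by move=> g h; rewrite norm_conjC.
  by move=> g h k; rewrite -!rmorphM cw.
exists n, (fun g A => AdR (Ub g) A); split.
  exact: (LPS_of_projrep hn uUb pUb (proj1 cUb)).
apply: (@stab_of_coh R gT _ _ _ _ (fun g => U g *t Ub g) (fun _ => (1%:M : 'M[R[i]]_1))
  (fun g h => Omega beta g h * (Omega beta g h)^*) (fun _ _ => 1)).
- by rewrite muln_gt0 hn.
- by [].
- by move=> g; apply: isounit_tens.
- by move=> g; split; rewrite adjmx1 mulmx1.
- by move=> g A; rewrite /stack (tens_map_Ad (U := U g) (U' := Ub g)).
- by move=> g A; rewrite /trivial_LPS /AdR adjmx1 mul1mx mulmx1.
- exact: projrep_tens.
- by move=> g h; rewrite mulmx1 scale1r.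
- exact: cocycle_mul2.
- by split => *; rewrite ?normr1 ?mulr1.
exists (fun _ => 1); split => [g|g h]; first by rewrite normr1.
rewrite invr1 !mulr1; symmetry.
by first [apply: norm1_cc | apply: norm1_cc'].
Qed.
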